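(* Assume (H4). Let $M,N\in\mathbb{N}$. The operator $T_{M,N}\colon X_{M}\to X_{M}$ has the same nonzero eigenvalues, with the same geometric and partial multiplicities, as the operator $\widehat{T}_{M,N}:=P_{M}T_{M,N}R_{M}\colon\widetilde{X}\to\widetilde{X}$. Moreover, if $\Phi\in X_{M}$ is an eigenvector of $T_{M,N}$ associated to a nonzero eigenvalue $\mu$, then $P_{M}\Phi\in\widetilde{X}$ is an eigenvector of $\widehat{T}_{M,N}$ associated to the same eigenvalue $\mu$.
   Context: Let $d\ge 1$ be an integer and $\tau>0$, $h\ge\tau$ real. $X$, $X^{+}$, $X^{\pm}$ are real normed spaces of functions $[-\tau,0]\to\mathbb{R}^{d}$, $[0,h]\to\mathbb{R}^{d}$, $[-\tau,h]\to\mathbb{R}^{d}$, respectively. For a function $u$ on $[-\tau,h]$, $u_{h}(\theta):=u(h+\theta)$, $\theta\in[-\tau,0]$. $V\colon X\times X^{+}\to X^{\pm}$ and $\mathcal{F}_{s}\colon X^{\pm}\to X^{+}$ are linear with $V(\phi,z)|_{[-\tau,0]}=\phi$. Let $\widetilde{X}\subseteq X$ and $\widetilde{X}^{+}\subseteq X^{+}$ be linear subspaces. For $M\in\mathbb{N}$, $X_{M}$ is a finite-dimensional space, $R_{M}\colon\widetilde{X}\to X_{M}$, $P_{M}\colon X_{M}\to X$ are linear with $R_{M}P_{M}=I_{X_{M}}$, $\mathcal{L}_{M}:=P_{M}R_{M}$, and $\Pi_{M}$ is the range of $P_{M}$. For $N\in\mathbb{N}$, analogously $X_{N}^{+}$,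 $R_{N}^{+}\colon\widetilde{X}^{+}\to X_{N}^{+}$, $P_{N}^{+}\colon X_{N}^{+}\to X^{+}$ with $R_{N}^{+}P_{N}^{+}=I_{X_{N}^{+}}$, and $\Pi_{N}^{+}$ the range of $P_{N}^{+}$. The operator $T_{M,N}\colon X_{M}\to X_{M}$ is defined by $T_{M,N}\Phi:=R_{M}V(P_{M}\Phi,P_{N}^{+}Z^{\ast})_{h}$, where $Z^{\ast}\in X_{N}^{+}$ is the (assumed unique) solution of $Z=R_{N}^{+}\mathcal{F}_{s}V(P_{M}\Phi,P_{N}^{+}Z)$. Hypothesis (H4): for all $M,N\in\mathbb{N}$, $\Pi_{M}\subseteq\Pi_{M+1}$, $\Pi_{N}^{+}\subseteq\Pi_{N+1}^{+}$, $\Pi_{M}\subseteq\widetilde{X}$, $\Pi_{N}^{+}\subseteq\widetilde{X}^{+}$, and for all $(\phi,z)\in\Pi_{M}\times\Pi_{N}^{+}$, $V(\phi,z)_{h}\in\widetilde{X}$ and $\mathcal{F}_{s}V(\phi,z)\in\widetilde{X}^{+}$. A partial multiplicity of an eigenvalue is the length of an associated Jordan chain. *)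

(* Defs.v *)
From HB Require Import structures.
From mathcomp Require Import all_boot all_order all_algebra.
From mathcomp Require Import boolp classical_sets functions reals.
Set Implicit Arguments. Unset Strict Implicit. Unset Printing Implicit Defensive.
Import Order.TTheory GRing.Theory Num.Theory.
Local Open Scope ring_scope.

(* A complex vector is a pair (u, v) standing for u + i v; a complex   *)
(* scalar is a pair (a, b) standing for a + i b.                        *)

Definition cscale (R : numDomainType) (U : lmodType R) (mu : R * R) (x : U * U)
  : U * U :=
  (mu.1 *: x.1 - mu.2 *: x.2, mu.1 *: x.2 + mu.2 *: x.1).

Definition cadd (R : numDomainType) (U : lmodType R) (x y : U * U) : U * U :=
  (x.1 + y.1, x.2 + y.2).

Definition cshift (R : numDomainType) (U : lmodType R) (A : U -> U)
  (mu : R * R) (x : U * U) : U * U :=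
  ((A x.1, A x.2).1 - (cscale mu x).1, (A x.1, A x.2).2 - (cscale mu x).2).

Definition cshiftn (R : numDomainType) (U : lmodType R) (A : U -> U)
  (mu : R * R) (k : nat) (x : U * U) : U * U := iter k (cshift A mu) x.

Definition cin (R : numDomainType) (U : lmodType R) (S : set U) (x : U * U) :=
  S x.1 /\ S x.2.

Definition cnonzero (R : numDomainType) (U : lmodType R) (x : U * U) :=
  x <> (0, 0).

Definition is_eigenvector (R : numDomainType) (U : lmodType R) (S : set U)
  (A : U -> U) (mu : R * R) (x : U * U) :=
  cin S x /\ cnonzero x /\ cshift A mu x = (0, 0).

Definition is_eigenvalue (R : numDomainType) (U : lmodType R) (S : set U)
  (A : U -> U) (mu : R * R) :=
  exists x, is_eigenvector S A mu x.

Definition cindep (R : numDomainType) (U : lmodType R) (n : nat)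
  (x : 'I_n -> U * U) :=
  forall c : 'I_n -> R * R,
    (\sum_(i < n) (cscale (c i) (x i)).1 = 0 /\
     \sum_(i < n) (cscale (c i) (x i)).2 = 0) ->
    forall i, c i = (0, 0).

Definition gker_dim_ge (R : numDomainType) (U : lmodType R) (S : set U)
  (A : U -> U) (mu : R * R) (k n : nat) :=
  exists x : 'I_n -> U * U,
    (forall i, cin S (x i) /\ cshiftn A mu k (x i) = (0, 0)) /\ cindep x.

Definition geom_mult_ge (R : numDomainType) (U : lmodType R) (S : set U)
  (A : U -> U) (mu : R * R) (n : nat) := gker_dim_ge S A mu 1 n.

Definition jordan_chain (R : numDomainType) (U : lmodType R) (S : set U)
  (A : U -> U) (mu : R * R) (k : nat) (x : nat -> U * U) :=
  (0 < k)%N /\ cnonzero (x 0%N) /\ (forall i, (i < k)%N -> cin S (x i)) /\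
  cshift A mu (x 0%N) = (0, 0) /\
  (forall i, (0 < i < k)%N -> cshift A mu (x i) = x i.-1).

Definition has_partial_mult (R : numDomainType) (U : lmodType R) (S : set U)
  (A : U -> U) (mu : R * R) (k : nat) :=
  exists x, jordan_chain S A mu k x.

(* Function spaces.  A function [a,b] -> R^d is encoded as a total      *)
(* function R -> 'rV[R]_d that vanishes outside [a,b].                  *)

Definition fn (R : realType) (d : nat) := R -> 'rV[R]_d.

Definition supported_in (R : realType) (d : nat) (a b : R) (f : fn R d) :=
  forall t, ~~ (a <= t <= b) -> f t = 0.

Definition fn_subspace (R : realType) (d : nat) (a b : R) (S : set (fn R d)) :=
  S 0 /\ (forall f g (c : R), S f -> S g -> S (c *: f + g)) /\
  (forall f, S f -> supported_in a b f).

Definition subspace_of (R : numDomainType) (U : lmodType R) (S : set U) :=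
  S 0 /\ (forall f g (c : R), S f -> S g -> S (c *: f + g)).

Definition shift_h (R : realType) (d : nat) (tau h : R) (u : fn R d) : fn R d :=
  fun theta => if (- tau <= theta <= 0) then u (h + theta) else 0.

Definition linear_on (R : numDomainType) (U W : lmodType R) (S : set U)
  (f : U -> W) :=
  forall x y (c : R), S x -> S y -> f (c *: x + y) = c *: f x + f y.

Definition linear_on2 (R : numDomainType) (U1 U2 W : lmodType R)
  (S1 : set U1) (S2 : set U2) (f : U1 -> U2 -> W) :=
  forall x1 y1 x2 y2 (c : R), S1 x1 -> S1 y1 -> S2 x2 -> S2 y2 ->
    f (c *: x1 + y1) (c *: x2 + y2) = c *: f x1 x2 + f y1 y2.

(* Main.v *)
Require Import Defs.
From HB Require Import structures.
From mathcomp Require Import all_boot all_order all_algebra.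
From mathcomp Require Import boolp classical_sets functions reals.
Set Implicit Arguments. Unset Strict Implicit. Unset Printing Implicit Defensive.
Import Order.TTheory GRing.Theory Num.Theory.
Local Open Scope ring_scope.
Local Open Scope classical_set_scope.

Definition pmap (T1 T2 : Type) (f : T1 -> T2) (x : T1 * T1) := (f x.1, f x.2).

Lemma P0 (R : realType) (U W : lmodType R) (P : W -> U) (Plin : linear P) :
  P 0 = 0.
Proof.
have := Plin 1 0 0; rewrite scale1r addr0 scale1r => h.
by apply: (addrI (P 0)); rewrite addr0 -h.
Qed.

Lemma PZ (R : realType) (U W : lmodType R) (P : W -> U) (Plin : linear P) a x :
  P (a *: x) = a *: P x.
Proof. by have := Plin a x 0; rewrite !addr0 (P0 Plin) addr0. Qed.

Lemma PD (R : realType) (U W : lmodType R) (P : W -> U) (Plin : linear P) x y :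
  P (x + y) = P x + P y.
Proof. by have := Plin 1 x y; rewrite !scale1r. Qed.

Lemma PB (R : realType) (U W : lmodType R) (P : W -> U) (Plin : linear P) x y :
  P (x - y) = P x - P y.
Proof. by rewrite (PD Plin) -scaleN1r (PZ Plin) scaleN1r. Qed.

Lemma Psum (R : realType) (U W : lmodType R) (P : W -> U) (Plin : linear P)
  n (F : 'I_n -> W) : P (\sum_(i < n) F i) = \sum_(i < n) P (F i).
Proof.
elim: n F => [|n IH] F; first by rewrite !big_ord0 (P0 Plin).
by rewrite !big_ord_recr /= (PD Plin) IH.
Qed.

Lemma pmap_cscale (R : realType) (U W : lmodType R) (P : W -> U) (Plin : linear P)
  mu x : pmap P (cscale mu x) = cscale mu (pmap P x).
Proof. by rewrite /pmap /cscale /= (PB Plin) (PD Plin) !(PZ Plin). Qed.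

Lemma pmap_cshift (R : realType) (U W : lmodType R) (P : W -> U) (Plin : linear P)
  (B : W -> W) (Rr : U -> W) (A : U -> U)
  (HA : forall u, A u = P (B (Rr u))) (RP : forall y, Rr (P y) = y) mu x :
  cshift A mu (pmap P x) = pmap P (cshift B mu x).
Proof.
rewrite /cshift -pmap_cscale // /pmap /= !HA !RP.
by rewrite !(PB Plin).
Qed.

Lemma pmap_cshiftn (R : realType) (U W : lmodType R) (P : W -> U) (Plin : linear P)
  (B : W -> W) (Rr : U -> W) (A : U -> U)
  (HA : forall u, A u = P (B (Rr u))) (RP : forall y, Rr (P y) = y) mu k x :
  cshiftn A mu k (pmap P x) = pmap P (cshiftn B mu k x).
Proof.
rewrite /cshiftn; elim: k => [|k IH] //=.
by rewrite IH (pmap_cshift Plin HA RP).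
Qed.

Lemma pmap00 (R : realType) (U W : lmodType R) (P : W -> U) (Plin : linear P) :
  pmap P (0, 0) = (0, 0).
Proof. by rewrite /pmap /= (P0 Plin). Qed.

Lemma pmap_inj (R : realType) (U W : lmodType R) (P : W -> U)
  (Rr : U -> W) (RP : forall y, Rr (P y) = y) x y :
  pmap P x = pmap P y -> x = y.
Proof.
case: x y => [x1 x2] [y1 y2]; rewrite /pmap /= => -[e1 e2].
by rewrite -(RP x1) -(RP x2) e1 e2 !RP.
Qed.

Lemma Pinj (R : realType) (U W : lmodType R) (P : W -> U)
  (Rr : U -> W) (RP : forall y, Rr (P y) = y) x y : P x = P y -> x = y.
Proof. by move=> e; rewrite -(RP x) e RP. Qed.

Definition inR (R : realType) (U W : lmodType R) (P : W -> U) (x : U * U) :=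
  exists y, x = pmap P y.

Lemma inR_pmap (R : realType) (U W : lmodType R) (P : W -> U)
  (Rr : U -> W) (RP : forall y, Rr (P y) = y) x :
  inR P x -> x = pmap P (pmap Rr x).
Proof. by case=> y ->; rewrite /pmap /= !RP. Qed.

Lemma sq_neq0 (R : realType) (a b : R) : (a, b) <> (0, 0) -> a * a + b * b != 0.
Proof.
move=> ab; rewrite -!expr2 paddr_eq0 ?sqr_ge0 // !sqrf_eq0.
by apply/negP => /andP [/eqP a0 /eqP b0]; apply: ab; rewrite a0 b0.
Qed.

Lemma step_inR (R : realType) (U W : lmodType R) (P : W -> U) (Plin : linear P)
  (B : W -> W) (Rr : U -> W) (A : U -> U)
  (HA : forall u, A u = P (B (Rr u))) mu y :
  mu <> (0, 0) -> inR P (cshift A mu y) -> inR P y.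
Proof.
case: mu => a b mu0 [[z1 z2]].
case: y => y1 y2; rewrite /cshift /cscale /pmap /= => -[h1 h2].
have e1 : a *: y1 - b *: y2 = P (B (Rr y1) - z1).
  by rewrite (PB Plin) -HA -h1 opprB [RHS]addrC addrNK.
have e2 : a *: y2 + b *: y1 = P (B (Rr y2) - z2).
  by rewrite (PB Plin) -HA -h2 opprB [RHS]addrC addrNK.
have nz := sq_neq0 mu0.
exists ((a * a + b * b)^-1 *: (a *: (B (Rr y1) - z1) + b *: (B (Rr y2) - z2)),
        (a * a + b * b)^-1 *: (a *: (B (Rr y2) - z2) - b *: (B (Rr y1) - z1))).
rewrite /pmap /= !(PZ Plin) (PD Plin) (PB Plin) !(PZ Plin) -e1 -e2.
have E1 : a *: (a *: y1 - b *: y2) + b *: (a *: y2 + b *: y1) = (a*a+b*b) *: y1.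
  by rewrite scalerBr scalerDr !scalerA (mulrC b a) addrA addrNK scalerDl.
have E2 : a *: (a *: y2 + b *: y1) - b *: (a *: y1 - b *: y2) = (a*a+b*b) *: y2.
  by rewrite scalerDr scalerBr !scalerA (mulrC b a) opprB (addrC (b*b *: y2)) addrA addrK scalerDl.
by rewrite E1 E2 !scalerA mulVf // !scale1r.
Qed.

Lemma key_inR (R : realType) (U W : lmodType R) (P : W -> U) (Plin : linear P)
  (B : W -> W) (Rr : U -> W) (A : U -> U)
  (HA : forall u, A u = P (B (Rr u))) mu k x :
  mu <> (0, 0) -> inR P (cshiftn A mu k x) -> inR P x.
Proof.
move=> mu0; rewrite /cshiftn; elim: k x => [|k IH] x //.
rewrite iterSr => /IH h; exact: (step_inR Plin HA mu0 h).
Qed.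

Lemma inR00 (R : realType) (U W : lmodType R) (P : W -> U) (Plin : linear P) :
  inR P (0, 0).
Proof. by exists (0, 0); rewrite pmap00. Qed.

Lemma gker_equiv (R : realType) (U W : lmodType R) (S : set U) (P : W -> U)
  (Plin : linear P) (B : W -> W) (Rr : U -> W) (A : U -> U)
  (HA : forall u, A u = P (B (Rr u))) (RP : forall y, Rr (P y) = y)
  (PS : forall y, S (P y)) mu k n :
  mu <> (0, 0) -> (gker_dim_ge setT B mu k n <-> gker_dim_ge S A mu k n).
Proof.
move=> mu0; split.
- case=> x [Hx Hind]; exists (fun i => pmap P (x i)); split.
    move=> i; split; first by split; apply: PS.
    by rewrite (pmap_cshiftn Plin HA RP) (proj2 (Hx i)) (pmap00 Plin).
  move=> c [s1 s2]; apply: Hind.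
  split; apply: (Pinj RP); rewrite (P0 Plin) (Psum Plin).
  + rewrite -[RHS]s1; apply: eq_bigr => i _.
    by rewrite -(pmap_cscale Plin).
  + rewrite -[RHS]s2; apply: eq_bigr => i _.
    by rewrite -(pmap_cscale Plin).
- case=> x [Hx Hind].
  have xR : forall i, x i = pmap P (pmap Rr (x i)).
    move=> i; apply: (inR_pmap RP); apply: (key_inR Plin HA (k:=k) mu0).
    by rewrite (proj2 (Hx i)); apply: inR00.
  exists (fun i => pmap Rr (x i)); split.
    move=> i; split; first by [].
    apply: (pmap_inj RP); rewrite -(pmap_cshiftn Plin HA RP) -xR (pmap00 Plin).
    exact: (proj2 (Hx i)).
  move=> c [s1 s2]; apply: Hind.
  split.
  + rewrite -[RHS](P0 Plin) -[RHS](congr1 P s1) (Psum Plin).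
    apply: eq_bigr => i _; rewrite {1}xR.
    by rewrite -(pmap_cscale Plin).
  + rewrite -[RHS](P0 Plin) -[RHS](congr1 P s2) (Psum Plin).
    apply: eq_bigr => i _; rewrite {1}xR.
    by rewrite -(pmap_cscale Plin).
Qed.

Lemma evec_map (R : realType) (U W : lmodType R) (S : set U) (P : W -> U)
  (Plin : linear P) (B : W -> W) (Rr : U -> W) (A : U -> U)
  (HA : forall u, A u = P (B (Rr u))) (RP : forall y, Rr (P y) = y)
  (PS : forall y, S (P y)) mu x :
  is_eigenvector setT B mu x -> is_eigenvector S A mu (pmap P x).
Proof.
case=> _ [nz e]; split; first by split; apply: PS.
split.
  move=> e0; apply: nz; apply: (pmap_inj RP); by rewrite e0 (pmap00 Plin).
by rewrite (pmap_cshift Plin HA RP) e (pmap00 Plin).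
Qed.

Lemma ev_equiv (R : realType) (U W : lmodType R) (S : set U) (P : W -> U)
  (Plin : linear P) (B : W -> W) (Rr : U -> W) (A : U -> U)
  (HA : forall u, A u = P (B (Rr u))) (RP : forall y, Rr (P y) = y)
  (PS : forall y, S (P y)) mu :
  mu <> (0, 0) -> (is_eigenvalue setT B mu <-> is_eigenvalue S A mu).
Proof.
move=> mu0; split.
  by case=> x hx; exists (pmap P x); apply: (evec_map Plin HA RP PS).
case=> x [_ [nz e]].
have xR : x = pmap P (pmap Rr x).
  apply: (inR_pmap RP); apply: (key_inR Plin HA (k:=1) mu0).
  by rewrite /cshiftn /= e; apply: inR00.
exists (pmap Rr x); split; first by [].
split.
  move=> e0; apply: nz; by rewrite xR e0 (pmap00 Plin).
apply: (pmap_inj RP); by rewrite -(pmap_cshift Plin HA RP) -xR e (pmap00 Plin).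
Qed.

Lemma pm_equiv (R : realType) (U W : lmodType R) (S : set U) (P : W -> U)
  (Plin : linear P) (B : W -> W) (Rr : U -> W) (A : U -> U)
  (HA : forall u, A u = P (B (Rr u))) (RP : forall y, Rr (P y) = y)
  (PS : forall y, S (P y)) mu k :
  mu <> (0, 0) -> (has_partial_mult setT B mu k <-> has_partial_mult S A mu k).
Proof.
move=> mu0; split.
  case=> x [k0 [nz [_ [e0 ei]]]]; exists (fun i => pmap P (x i)).
  split; first by [].
  split.
    move=> e; apply: nz; apply: (pmap_inj RP); by rewrite e (pmap00 Plin).
  split; first by move=> i _; split; apply: PS.
  split; first by rewrite (pmap_cshift Plin HA RP) e0 (pmap00 Plin).
  by move=> i hi; rewrite (pmap_cshift Plin HA RP) ei.
case=> x [k0 [nz [xS [e0 ei]]]].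
have xit : forall i, (i < k)%N -> cshiftn A mu i.+1 (x i) = (0, 0).
  elim=> [|i IH] hi; first by rewrite /cshiftn /= e0.
  rewrite /cshiftn iterSr ei; last by rewrite hi andbT.
  exact: IH (ltnW hi).
have xR : forall i, (i < k)%N -> x i = pmap P (pmap Rr (x i)).
  move=> i hi; apply: (inR_pmap RP); apply: (key_inR Plin HA (k:=i.+1) mu0).
  by rewrite xit //; apply: inR00.
exists (fun i => pmap Rr (x i)).
split; first by [].
split.
  move=> e; apply: nz; by rewrite (xR 0%N k0) e (pmap00 Plin).
split; first by move=> i _; split.
split.
  apply: (pmap_inj RP).
  by rewrite -(pmap_cshift Plin HA RP) -(xR 0%N k0) e0 (pmap00 Plin).
move=> i /andP [i0 hi]; apply: (pmap_inj RP).
rewrite -(pmap_cshift Plin HA RP) -(xR i hi) ei ?i0 ?hi //.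
apply: xR; exact: leq_ltn_trans (leq_pred i) hi.
Qed.

Unset Implicit Arguments.

Theorem proposition4p4
  (R : realType) (d : nat) (tau h : R) (Htau : 0 < tau) (Hh : tau <= h)
  (* X, X^+, X^{+-} and the subspaces X~ of X, X~^+ of X^+ *)
  (X Xp Xpm Xt Xtp : set (fn R d))
  (HX : fn_subspace (- tau) 0 X) (HXp : fn_subspace 0 h Xp)
  (HXpm : fn_subspace (- tau) h Xpm)
  (HXt : subspace_of Xt) (HXtX : Xt `<=` X)
  (HXtp : subspace_of Xtp) (HXtpXp : Xtp `<=` Xp)
  (* V and F_s *)
  (V : fn R d -> fn R d -> fn R d) (Fs : fn R d -> fn R d)
  (HVin : forall phi z, X phi -> Xp z -> Xpm (V phi z))
  (HVlin : linear_on2 X Xp V)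
  (HVrestr : forall phi z t, X phi -> Xp z -> - tau <= t <= 0 -> V phi z t = phi t)
  (HFsin : forall u, Xpm u -> Xp (Fs u))
  (HFslin : linear_on Xpm Fs)
  (* discretization spaces and restriction/prolongation operators *)
  (XM : nat -> vectType R) (RM : forall M, fn R d -> XM M)
  (PM : forall M, XM M -> fn R d)
  (XN : nat -> vectType R) (RN : forall N, fn R d -> XN N)
  (PN : forall N, XN N -> fn R d)
  (HRMlin : forall M, linear_on Xt (RM M))
  (HPMlin : forall M, linear (PM M)) (HPMin : forall M Phi, X (PM M Phi))
  (HRPM : forall M Phi, RM M (PM M Phi) = Phi)
  (HRNlin : forall N, linear_on Xtp (RN N))
  (HPNlin : forall N, linear (PN N)) (HPNin : forall N Z, Xp (PN N Z))
  (HRPN : forall N Z, RN N (PN N Z) = Z)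
  (* Hypothesis (H4) *)
  (H4 : forall M N,
      range (PM M) `<=` range (PM M.+1) /\
      range (PN N) `<=` range (PN N.+1) /\
      range (PM M) `<=` Xt /\ range (PN N) `<=` Xtp /\
      (forall phi z, range (PM M) phi -> range (PN N) z ->
         Xt (shift_h tau h (V phi z)) /\ Xtp (Fs (V phi z))))
  (M N : nat)
  (* uniqueness of the solution Z* of the fixed-point equation *)
  (Huniq : forall Phi : XM M, exists! Z : XN N,
      Z = RN N (Fs (V (PM M Phi) (PN N Z))))
  (* T = T_{M,N} *)
  (T : XM M -> XM M)
  (HT : forall Phi : XM M, exists Z : XN N,
      Z = RN N (Fs (V (PM M Phi) (PN N Z))) /\
      T Phi = RM M (shift_h tau h (V (PM M Phi) (PN N Z)))) :
  let That : fn R d -> fn R d := fun u => PM M (T (RM M u)) in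
  (forall mu : R * R, mu <> (0, 0) ->
     (is_eigenvalue setT T mu <-> is_eigenvalue Xt That mu) /\
     (forall n, geom_mult_ge setT T mu n <-> geom_mult_ge Xt That mu n) /\
     (forall k, has_partial_mult setT T mu k <-> has_partial_mult Xt That mu k) /\
     (forall k n, gker_dim_ge setT T mu k n <-> gker_dim_ge Xt That mu k n)) /\
  (forall (mu : R * R) (Phi : XM M * XM M), mu <> (0, 0) ->
     is_eigenvector setT T mu Phi ->
     is_eigenvector Xt That mu (PM M Phi.1, PM M Phi.2)).
Proof.
move=> That.
have Plin := HPMlin M.
have RP := HRPM M.
have PS : forall y, Xt (PM M y).
  by move=> y; apply: (proj1 (proj2 (proj2 (H4 M N)))); exists y.
have HA : forall u, That u = PM M (T (RM M u)) by [].
split.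
  move=> mu mu0; split; first exact: (ev_equiv Plin HA RP PS mu0).
  split; first by move=> n; exact: (gker_equiv Plin HA RP PS 1 n mu0).
  split; first by move=> k; exact: (pm_equiv Plin HA RP PS k mu0).
  by move=> k n; exact: (gker_equiv Plin HA RP PS k n mu0).
by move=> mu Phi _ hev; exact: (evec_map Plin HA RP PS hev).
Qed.
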